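(* Let $k$ be an algebraically closed field with $\operatorname{char}(k)\nmid(d+1)!$, $S=k[x_1,\dots,x_n]$, $\mathcal{D}=k[z_1,\dots,z_n]$, with the apolarity action $\mathcal{D}\times S\to S$, $F\circ g=F(\partial/\partial x_1,\dots,\partial/\partial x_n)\,g$. For $f\in S_{d+1}$, the apolar ideal $f^{\perp}=\{F\in\mathcal{D}\mid F\circ f=0\}$ has a minimal generator in degree $d+1$ if and only if there exists $g\in S_{d+1}$, not a scalar multiple of $f$, such that $\langle\nabla g\rangle\subset\langle\nabla f\rangle$.
   Context: $\langle\nabla f\rangle$ denotes the $k$-span of $\partial f/\partial x_1,\dots,\partial f/\partial x_n$ in $S_d$. *)

(* Defs.v *)
From HB Require Import structures.
From mathcomp Require Import all_boot all_order all_algebra.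
From mathcomp Require Import mpoly.
Set Implicit Arguments. Unset Strict Implicit. Unset Printing Implicit Defensive.
Import Order.TTheory GRing.Theory.
Local Open Scope ring_scope.

(* S = k[x_1..x_n] and D = k[z_1..z_n] are both modelled by {mpoly k[n]}. *)

Definition apolar (k : fieldType) (n : nat) (F g : {mpoly k[n]}) : {mpoly k[n]} :=
  \sum_(m <- msupp F) F@_m *: mderivm m g.

Definition in_apolar (k : fieldType) (n : nat) (f F : {mpoly k[n]}) : Prop :=
  apolar F f = 0.

Definition in_ideal_gen (k : fieldType) (n : nat)
  (P : {mpoly k[n]} -> Prop) (F : {mpoly k[n]}) : Prop :=
  exists (s : seq ({mpoly k[n]} * {mpoly k[n]})),
    (forall hG, hG \in s -> P hG.2) /\ F = \sum_(hG <- s) hG.1 * hG.2.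

Definition has_min_gen_in_degree (k : fieldType) (n : nat)
  (f : {mpoly k[n]}) (e : nat) : Prop :=
  exists F : {mpoly k[n]},
    [/\ F \is e.-homog, in_apolar f F &
      ~ in_ideal_gen (fun G => in_apolar f G /\ exists j, (j < e)%N /\ G \is j.-homog) F].

Definition grad_span_sub (k : fieldType) (n : nat) (g f : {mpoly k[n]}) : Prop :=
  forall i : 'I_n, exists c : 'I_n -> k,
    mderiv i g = \sum_(j < n) c j *: mderiv j f.

(* Main.v *)
Require Import Defs.
From HB Require Import structures.
From mathcomp Require Import all_boot all_order all_algebra.
From mathcomp Require Import mpoly.
From mathcomp Require Import ssrcomplements.
Import GRing.Theory.
Local Open Scope ring_scope.

Set Implicit Arguments. Unset Strict Implicit. Unset Printing Implicit Defensive.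

Lemma apolarwE (k : fieldType) (n K : nat) (F h : {mpoly k[n]}) :
  (msize F <= K)%N -> apolar F h = \sum_(m : 'X_{1..n < K}) F@_m *: mderivm m h.
Proof.
move=> lt_pk; pose I : subFinType _ := 'X_{1..n < K}.
rewrite /apolar (big_mksub I) //=; first last.
  by move=> x /msize_mdeg_lt /leq_trans; apply.
  by rewrite msupp_uniq.
by rewrite big_rmcond //= => i; move/memN_msupp_eq0 ->; rewrite scale0r.
Qed.

Lemma apolar_lin (k : fieldType) (n : nat) (a : k) (F G h : {mpoly k[n]}) :
  apolar (a *: F + G) h = a *: apolar F h + apolar G h.
Proof.
pose K := (msize F + msize G)%N.
have hF : (msize F <= K)%N by rewrite leq_addr.
have hG : (msize G <= K)%N by rewrite leq_addl.
have hFG : (msize (a *: F + G) <= K)%N.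
  apply: leq_trans (msizeD_le _ _) _; rewrite geq_max hG andbT.
  exact: leq_trans (msizeZ_le _ _) hF.
rewrite !(apolarwE h hF, apolarwE h hG, apolarwE h hFG) scaler_sumr -big_split.
by apply: eq_bigr => m _; rewrite mcoeffD mcoeffZ scalerDl scalerA.
Qed.

Lemma apolar0l (k : fieldType) (n : nat) (h : {mpoly k[n]}) : apolar 0 h = 0.
Proof. by rewrite /apolar msupp0 big_nil. Qed.

Lemma apolarD (k : fieldType) (n : nat) (F G h : {mpoly k[n]}) :
  apolar (F + G) h = apolar F h + apolar G h.
Proof. by have := apolar_lin 1 F G h; rewrite !scale1r. Qed.

Lemma apolarZ (k : fieldType) (n : nat) a (F h : {mpoly k[n]}) :
  apolar (a *: F) h = a *: apolar F h.
Proof. by have := apolar_lin a F 0 h; rewrite !addr0 apolar0l addr0. Qed.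

Lemma apolar_sum (k : fieldType) (n : nat) (I : Type) (r : seq I) (P : pred I)
   (Fs : I -> {mpoly k[n]}) h :
  apolar (\sum_(i <- r | P i) Fs i) h = \sum_(i <- r | P i) apolar (Fs i) h.
Proof.
elim: r => [|x r ih]; first by rewrite !big_nil apolar0l.
by rewrite !big_cons; case: (P x); rewrite ?apolarD ih.
Qed.

Lemma apolarX (k : fieldType) (n : nat) m (h : {mpoly k[n]}) :
  apolar 'X_[m] h = mderivm m h.
Proof. by rewrite /apolar msuppX big_seq1 mcoeffX eqxx scale1r. Qed.

Lemma apolar_linr (k : fieldType) (n : nat) a (F g h : {mpoly k[n]}) :
  apolar F (a *: g + h) = a *: apolar F g + apolar F h.
Proof.
rewrite /apolar scaler_sumr -big_split; apply: eq_bigr => m _.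
by rewrite mderivmD mderivmZ scalerDr !scalerA mulrC.
Qed.

Lemma apolar0r (k : fieldType) (n : nat) (F : {mpoly k[n]}) : apolar F 0 = 0.
Proof.
rewrite /apolar big1 // => m _.
by rewrite -[0 : {mpoly k[n]}](scale0r (0 : {mpoly k[n]})) mderivmZ !scale0r scaler0.
Qed.

Lemma mderivm0r (k : fieldType) (n : nat) m : mderivm m (0 : {mpoly k[n]}) = 0.
Proof. by rewrite -[0 : {mpoly k[n]}](scale0r (0 : {mpoly k[n]})) mderivmZ !scale0r. Qed.

Lemma mderivm_sum (k : fieldType) (n : nat) m (I : Type) (r : seq I) (P : pred I)
   (Fs : I -> {mpoly k[n]}) :
  mderivm m (\sum_(i <- r | P i) Fs i) = \sum_(i <- r | P i) mderivm m (Fs i).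
Proof.
elim: r => [|x r ih]; first by rewrite !big_nil mderivm0r.
by rewrite !big_cons; case: (P x); rewrite ?mderivmD ih.
Qed.

Lemma mderiv_sum (k : fieldType) (n : nat) i (I : Type) (r : seq I) (P : pred I)
   (Fs : I -> {mpoly k[n]}) :
  mderiv i (\sum_(j <- r | P j) Fs j) = \sum_(j <- r | P j) mderiv i (Fs j).
Proof. by rewrite -mderivmU1m mderivm_sum; apply: eq_bigr => j _; rewrite mderivmU1m. Qed.

Lemma apolarM (k : fieldType) (n : nat) (F G h : {mpoly k[n]}) :
  apolar (F * G) h = apolar F (apolar G h).
Proof.
rewrite {1}[F]mpolyE mulr_suml apolar_sum [in RHS]/apolar.
apply: eq_bigr => a _; rewrite -scalerAl apolarZ; congr (_ *: _).
rewrite {1}[G]mpolyE mulr_sumr apolar_sum mderivm_sum.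
apply: eq_bigr => b _.
rewrite -scalerAr apolarZ -mpolyXD apolarX.
by rewrite mderivmZ addmC mderivmDm.
Qed.

Lemma apolar_mderiv (k : fieldType) (n : nat) i (F h : {mpoly k[n]}) :
  apolar F (mderiv i h) = mderiv i (apolar F h).
Proof.
rewrite /apolar mderiv_sum; apply: eq_bigr => m _.
by rewrite mderivZ -!mderivmU1m -!mderivmDm addmC.
Qed.

Lemma mcoeff0_mderivm (k : fieldType) (n : nat) m (h : {mpoly k[n]}) :
  (mderivm m h)@_0 = h@_m * (\prod_(i < n) (m i)`!)%:R.
Proof.
rewrite mcoeff_mderivm addm0 mulr_natr; congr (_ *+ _).
by apply: eq_bigr => i _; rewrite ffactnn.
Qed.

Lemma homog_coeffP (k : fieldType) (n e : nat) (p : {mpoly k[n]}) :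
  (forall m, mdeg m != e -> p@_m = 0) -> p \is e.-homog.
Proof.
move=> H; apply/dhomogP => m; rewrite mcoeff_msupp => nz.
by apply/eqP; apply: contraNT nz => /H ->.
Qed.

Lemma mderivm_homog (k : fieldType) (n e : nat) m (h : {mpoly k[n]}) :
  h \is e.-homog -> (mdeg m <= e)%N -> mderivm m h \is (e - mdeg m).-homog.
Proof.
move=> hh le; apply: homog_coeffP => m' ne.
rewrite mcoeff_mderivm (dhomog_nemf_coeff hh) ?mul0rn //.
apply/eqP => H; move/eqP: ne; apply; rewrite -H.
change (mdeg m' = mdeg (m + m') - mdeg m)%N; by rewrite mdegD addKn.
Qed.

Lemma apolar_homog (k : fieldType) (n j e : nat) (G h : {mpoly k[n]}) :
  G \is j.-homog -> h \is e.-homog -> (j <= e)%N -> apolar G h \is (e - j).-homog.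
Proof.
move=> hG hh le; rewrite /apolar big_seq rpred_sum // => m /(dhomog_mf hG) dm.
by apply: rpredZ; rewrite -dm; apply: mderivm_homog; rewrite ?dm.
Qed.

Lemma apolarZr (k : fieldType) (n : nat) a (F g : {mpoly k[n]}) :
  apolar F (a *: g) = a *: apolar F g.
Proof. by have := apolar_linr a F g 0; rewrite !addr0 apolar0r addr0. Qed.

Lemma apolarDr (k : fieldType) (n : nat) (F g h : {mpoly k[n]}) :
  apolar F (g + h) = apolar F g + apolar F h.
Proof. by have := apolar_linr 1 F g h; rewrite !scale1r. Qed.

Lemma apolar_sumr (k : fieldType) (n : nat) (I : Type) (r : seq I) (P : pred I)
   (Fs : I -> {mpoly k[n]}) F :
  apolar F (\sum_(i <- r | P i) Fs i) = \sum_(i <- r | P i) apolar F (Fs i).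
Proof.
elim: r => [|x r ih]; first by rewrite !big_nil apolar0r.
by rewrite !big_cons; case: (P x); rewrite ?apolarDr ih.
Qed.

Lemma nat_nz (k : fieldType) (d j : nat) :
  ((d.+1)`!)%:R != 0 :> k -> (0 < j <= d.+1)%N -> j%:R != 0 :> k.
Proof.
move=> hf /dvdn_fact /dvdnP [q hq]; apply: contra hf => /eqP hj.
by rewrite hq natrM hj mulr0.
Qed.

Lemma fact_nz (k : fieldType) (d j : nat) :
  ((d.+1)`!)%:R != 0 :> k -> (j <= d.+1)%N -> (j`!)%:R != 0 :> k.
Proof.
move=> hf; elim: j => [|j ih] hj; first by rewrite fact0 oner_neq0.
rewrite factS natrM mulf_neq0 ?ih ?(ltnW hj) //.
by apply: (nat_nz hf); rewrite hj.
Qed.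

Lemma mnm_le_mdeg (n : nat) (m : 'X_{1..n}) i : (m i <= mdeg m)%N.
Proof. by rewrite mdegE (bigD1 i) //= leq_addr. Qed.

Definition mfact (n : nat) (m : 'X_{1..n}) : nat := \prod_(i < n) (m i)`!.

Lemma mfact_nz (k : fieldType) (n d : nat) (m : 'X_{1..n}) :
  ((d.+1)`!)%:R != 0 :> k -> (mdeg m <= d.+1)%N -> (mfact m)%:R != 0 :> k.
Proof.
move=> hf hm; rewrite /mfact natr_prod; apply/prodf_neq0 => i _.
exact: (fact_nz hf (leq_trans (mnm_le_mdeg m i) hm)).
Qed.

Lemma pairX (k : fieldType) (n : nat) m (h : {mpoly k[n]}) :
  (apolar 'X_[m] h)@_0 = h@_m * (mfact m)%:R.
Proof. by rewrite apolarX mcoeff0_mderivm. Qed.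

Lemma zero_deriv (k : fieldType) (n d e : nat) (p : {mpoly k[n]}) :
  ((d.+1)`!)%:R != 0 :> k -> p \is e.-homog -> (0 < e <= d.+1)%N ->
  (forall l, mderiv l p = 0) -> p = 0.
Proof.
move=> hf hp /andP [e0 ed] hd; apply/mpolyP => m; rewrite mcoeff0.
have [me|me] := eqVneq (mdeg m) e; last by rewrite (dhomog_nemf_coeff hp).
case: (pickP (fun l => 0 < m l)%N) => [l hl|h0]; last first.
  move: e0; rewrite -me mdegE big1 // => i _.
  by move: (h0 i) => /= /negbT; rewrite lt0n negbK => /eqP.
have eq : m = (m - U_(l) + U_(l))%MM.
  apply/mnmP => i; rewrite mnmDE mnmBE mnm1E.
  by case: eqP => [<-|_]; rewrite ?subn0 ?addn0 // subnK.
have := hd l; move/(congr1 (mcoeff (m - U_(l))%MM)).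
rewrite mcoeff_mderiv -eq mcoeff0 mnmBE mnm1E eqxx subn1 prednK //.
have hnz : (m l)%:R != 0 :> k.
  by apply: (nat_nz hf); rewrite hl (leq_trans (mnm_le_mdeg m l)) // me.
by move/eqP; rewrite -mulr_natr mulf_eq0 (negbTE hnz) orbF => /eqP.
Qed.

Lemma apolar_vanish (k : fieldType) (n d j : nat) (f g G : {mpoly k[n]}) :
  ((d.+1)`!)%:R != 0 :> k -> g \is (d.+1).-homog -> grad_span_sub g f ->
  in_apolar f G -> G \is j.-homog -> (j < d.+1)%N -> apolar G g = 0.
Proof.
move=> hf hg hgr hG hGj jd.
apply: (zero_deriv hf (apolar_homog hGj hg (ltnW jd))).
  by rewrite subn_gt0 jd leq_subr.
move=> l; rewrite -apolar_mderiv; have [c ->] := hgr l.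
rewrite apolar_sumr big1 // => i _.
by rewrite apolarZr apolar_mderiv hG mderiv0 scaler0.
Qed.

Lemma pair_lin2 (k : fieldType) (n : nat) a m0 m1 (h : {mpoly k[n]}) :
  (apolar (a *: 'X_[m0] + 'X_[m1]) h)@_0 =
     a * (h@_m0 * (mfact m0)%:R) + h@_m1 * (mfact m1)%:R.
Proof. by rewrite apolarD apolarZ mcoeffD mcoeffZ !pairX. Qed.

Lemma dir_back (k : fieldType) (n d : nat) (f g : {mpoly k[n]}) :
  ((d.+1)`!)%:R != 0 :> k -> f \is (d.+1).-homog -> g \is (d.+1).-homog ->
  ~ (exists c : k, g = c *: f) -> grad_span_sub g f ->
  has_min_gen_in_degree f d.+1.
Proof.
move=> hf hfh hg hnm hgr.
have fnz : f != 0.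
  apply/eqP => f0; apply: hnm; exists 0; rewrite scale0r.
  apply: (zero_deriv hf hg); first by rewrite ltnSn.
  move=> l; have [c ->] := hgr l; rewrite big1 // => i _.
  by rewrite f0 mderiv0 scaler0.
have [m0 hm0] : exists m0, f@_m0 != 0.
  move: fnz; rewrite -msupp_eq0; case E: (msupp f) => [|m0 s] // _.
  by exists m0; rewrite -mcoeff_msupp E mem_head.
pose c := g@_m0 / f@_m0.
pose g' := g - c *: f.
have g'nz : g' != 0.
  apply/eqP => e; apply: hnm; exists c; apply/eqP; rewrite -subr_eq0; exact/eqP.
have [m1 hm1] : exists m1, g'@_m1 != 0.
  move: g'nz; rewrite -msupp_eq0; case E: (msupp g') => [|m1 s] // _.
  by exists m1; rewrite -mcoeff_msupp E mem_head.
have g'm0 : g'@_m0 = 0.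
  by rewrite /g' mcoeffB mcoeffZ /c mulfVK // subrr.
have g'h : g' \is (d.+1).-homog by rewrite rpredB // rpredZ.
have dm0 : mdeg m0 = d.+1 by apply: (dhomog_mf hfh); rewrite mcoeff_msupp.
have dm1 : mdeg m1 = d.+1 by apply: (dhomog_mf g'h); rewrite mcoeff_msupp.
have fm0 : (mfact m0)%:R != 0 :> k by apply: (mfact_nz hf); rewrite dm0.
have fm1 : (mfact m1)%:R != 0 :> k by apply: (mfact_nz hf); rewrite dm1.
pose a := - (f@_m1 * (mfact m1)%:R) / (f@_m0 * (mfact m0)%:R).
pose F := a *: 'X_[m0] + 'X_[m1] : {mpoly k[n]}.
have Fh : F \is (d.+1).-homog.
  by rewrite rpredD ?rpredZ // dhomogX /= ?dm0 ?dm1.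
have Ff : in_apolar f F.
  rewrite /in_apolar; apply/mpolyP => m; rewrite mcoeff0.
  have Fh0 := apolar_homog Fh hfh (leqnn _); rewrite subnn in Fh0.
  have [/eqP|ne] := eqVneq (mdeg m) 0%N; last by rewrite (dhomog_nemf_coeff Fh0).
  rewrite mdeg_eq0 => /eqP ->; rewrite pair_lin2 /a.
  by rewrite mulfVK ?mulf_neq0 // addNr.
have Fg : apolar F g != 0.
  apply/negP => /eqP e.
  have : apolar F g' = 0.
    by rewrite /g' apolarDr -scaleN1r apolarZr apolarZr e [apolar F f]Ff !scaler0 addr0.
  move/(congr1 (mcoeff 0)); rewrite pair_lin2 g'm0 mul0r mulr0 add0r mcoeff0.
  by apply/eqP; rewrite mulf_neq0.
exists F; split => // -[s [hs hF]]; move/eqP: Fg; apply.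
rewrite hF apolar_sum big_seq big1 // => -[h G] /hs /= [hG [j [jd hGj]]].
by rewrite apolarM (apolar_vanish hf hg hgr hG hGj jd) apolar0r.
Qed.

Definition Bt (n d : nat) := 'X_{1..n < d.+2}.
Definition ev (n d : nat) (i : 'I_#|{: Bt n d}|) : 'X_{1..n} := val (enum_val i).

Lemma ev_inj (n d : nat) : injective (@ev n d).
Proof. by move=> i j /val_inj /enum_val_inj. Qed.

Lemma mdeg_ev (n d : nat) (i : 'I_#|{: Bt n d}|) : (mdeg (ev i) < d.+2)%N.
Proof. by rewrite /ev; case: (enum_val i). Qed.

Lemma ev_surj (n d : nat) (m : 'X_{1..n}) : (mdeg m < d.+2)%N ->
  exists t : 'I_#|{: Bt n d}|, ev t = m.
Proof.
move=> hm; pose b : Bt n d := BMultinom hm.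
by exists (enum_rank b); rewrite /ev enum_rankK.
Qed.

Lemma sumB (R : nmodType) (n d : nat) (G : 'X_{1..n} -> R) :
  \sum_(b : Bt n d) G (val b) = \sum_(i < #|{: Bt n d}|) G (ev i).
Proof. by rewrite big_enum_val. Qed.

Lemma msize_homog (k : fieldType) (n e : nat) (p : {mpoly k[n]}) :
  p \is e.-homog -> (msize p <= e.+1)%N.
Proof. by move=> hp; rewrite msizeE; apply/bigmax_leqP_seq => m hm _; move/(dhomog_mf hp): hm => ->. Qed.

Lemma recon (k : fieldType) (n d : nat) (p : {mpoly k[n]}) : (msize p <= d.+2)%N ->
  p = \sum_(i < #|{: Bt n d}|) p@_(ev i) *: 'X_[ev i].
Proof. by move=> hp; rewrite {1}(mpolywE hp) (@sumB _ n d (fun m => p@_m *: 'X_[m])). Qed.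

Lemma mcoeff_sum (k : fieldType) (n : nat) m (I : Type) (r : seq I) (P : pred I)
   (Fs : I -> {mpoly k[n]}) :
  (\sum_(i <- r | P i) Fs i)@_m = \sum_(i <- r | P i) (Fs i)@_m.
Proof.
elim: r => [|x r ih]; first by rewrite !big_nil mcoeff0.
by rewrite !big_cons; case: (P x); rewrite ?mcoeffD ih.
Qed.

Definition Dmx (k : fieldType) (n d : nat) (f : {mpoly k[n]}) : 'M[k]_(#|{:Bt n d}|, n) :=
  \matrix_(i, l) ((mdeg (ev i) == d)%:R * (mderivm (ev i) f)@_(U_(l))).

Definition Gx (k : fieldType) (n d : nat) (x : 'rV[k]_#|{:Bt n d}|) : {mpoly k[n]} :=
  \sum_i ((mdeg (ev i) == d)%:R * x 0 i) *: 'X_[ev i].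

Arguments Dmx {k n} d f.

Lemma Gx_homog (k : fieldType) (n d : nat) (x : 'rV[k]_#|{:Bt n d}|) : Gx x \is d.-homog.
Proof.
rewrite /Gx rpred_sum // => i _.
have [e|e] := eqVneq (mdeg (ev i)) d; last by rewrite mul0r scale0r rpred0.
by rewrite rpredZ // dhomogX /= e.
Qed.

Lemma Gx_apolar (k : fieldType) (n d : nat) (f : {mpoly k[n]}) (x : 'rV[k]_#|{:Bt n d}|) :
  f \is (d.+1).-homog -> x *m Dmx d f = 0 -> apolar (Gx x) f = 0.
Proof.
move=> hf hx.
have hp := apolar_homog (Gx_homog x) hf (leqnSn d); rewrite subSnn in hp.
apply/mpolyP => m; rewrite mcoeff0.
have [/eqP e|e] := eqVneq (mdeg m) 1%N; last by rewrite (dhomog_nemf_coeff hp).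
have /mdeg1P [l /eqP ->] := e.
move/matrixP: hx => /(_ 0 l); rewrite !mxE => <-.
rewrite /Gx apolar_sum mcoeff_sum; apply: eq_bigr => i _.
by rewrite apolarZ mcoeffZ apolarX !mxE mulrCA mulrA.
Qed.

Definition Gr (k : fieldType) (n d : nat) (f : {mpoly k[n]}) (r : 'I_#|{:Bt n d}|) :=
  Gx (row r (kermx (Dmx d f))).

Arguments Gr {k n} d f r.

Lemma Gr_apolar (k : fieldType) (n d : nat) (f : {mpoly k[n]}) r :
  f \is (d.+1).-homog -> in_apolar f (Gr d f r).
Proof. by move=> hf; apply: Gx_apolar => //; rewrite -row_mul mulmx_ker row0. Qed.

Lemma Gr_homog (k : fieldType) (n d : nat) (f : {mpoly k[n]}) r : Gr d f r \is d.-homog.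
Proof. exact: Gx_homog. Qed.

Lemma XG_homog (k : fieldType) (n d : nat) (G : {mpoly k[n]}) j :
  G \is d.-homog -> 'X_j * G \is (d.+1).-homog.
Proof.
move=> hG; have hX : ('X_j : {mpoly k[n]}) \is 1.-homog by rewrite dhomogX /= mdeg1.
by have := dhomogM hX hG; rewrite add1n.
Qed.

Definition Umx (k : fieldType) (n d : nat) (f : {mpoly k[n]}) :
  'M[k]_(#|{: 'I_n * 'I_#|{:Bt n d}| }|, #|{:Bt n d}|) :=
  \matrix_(p, i) (('X_(enum_val p).1 * Gr d f (enum_val p).2)@_(ev i)).

Definition rv (k : fieldType) (n d : nat) (p : {mpoly k[n]}) : 'rV[k]_#|{:Bt n d}| :=
  \row_i p@_(ev i).

Arguments Umx {k n} d f.
Arguments rv {k n} d p.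

Lemma notinU (k : fieldType) (n d : nat) (f F : {mpoly k[n]}) :
  f \is (d.+1).-homog -> F \is (d.+1).-homog ->
  ~ in_ideal_gen (fun G => in_apolar f G /\ exists j, (j < d.+1)%N /\ G \is j.-homog) F ->
  ~~ (rv d F <= Umx d f)%MS.
Proof.
move=> hf hF hnot; apply/negP => /submxP [y hy]; apply: hnot.
exists [seq (y 0 p *: 'X_(enum_val p).1, Gr d f (enum_val p).2) | p <- enum 'I_#|{: 'I_n * 'I_#|{:Bt n d}| }|].
split.
  move=> hG /mapP [p _ ->] /=; split; first exact: Gr_apolar.
  by exists d; split; [exact: ltnSn | exact: Gr_homog].
rewrite big_map big_enum /=.
have eF : forall i, F@_(ev i) = \sum_p y 0 p * Umx d f p i.
  by move=> i; move/matrixP: hy => /(_ 0 i); rewrite !mxE.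
rewrite {1}(recon (msize_homog hF)).
rewrite (eq_bigr (fun i => \sum_p (y 0 p * Umx d f p i) *: 'X_[ev i])); last first.
  by move=> i _; rewrite eF scaler_suml.
rewrite exchange_big /=; apply: eq_bigr => p _.
rewrite -scalerAl [X in _ = _ *: X](recon (msize_homog (XG_homog _ (Gr_homog _ _)))).
rewrite scaler_sumr; apply: eq_bigr => i _.
by rewrite mxE scalerA.
Qed.

Definition gw (k : fieldType) (n d : nat) (w : 'cV[k]_#|{:Bt n d}|) : {mpoly k[n]} :=
  \sum_i ((mdeg (ev i) == d.+1)%:R * w i 0 / (mfact (ev i))%:R) *: 'X_[ev i].
Arguments gw {k n} d w.

Lemma gw_homog (k : fieldType) (n d : nat) (w : 'cV[k]_#|{:Bt n d}|) : gw d w \is (d.+1).-homog.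
Proof.
rewrite /gw rpred_sum // => i _.
have [e|e] := eqVneq (mdeg (ev i)) d.+1; last by rewrite mul0r mul0r scale0r rpred0.
by rewrite rpredZ // dhomogX /= e.
Qed.

Lemma gw_coeff (k : fieldType) (n d : nat) (w : 'cV[k]_#|{:Bt n d}|) t :
  (gw d w)@_(ev t) = (mdeg (ev t) == d.+1)%:R * w t 0 / (mfact (ev t))%:R.
Proof.
rewrite /gw mcoeff_sum (bigD1 t) //= mcoeffZ mcoeffX eqxx mulr1 big1 ?addr0 //.
move=> i ne; rewrite mcoeffZ mcoeffX.
have -> : (ev i == ev t) = false by apply/negbTE; apply: contra ne => /eqP /ev_inj ->.
by rewrite mulr0.
Qed.

Lemma pair_gw (k : fieldType) (n d : nat) (w : 'cV[k]_#|{:Bt n d}|) (H : {mpoly k[n]}) :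
  ((d.+1)`!)%:R != 0 :> k -> H \is (d.+1).-homog ->
  (apolar H (gw d w))@_0 = (rv d H *m w) 0 0.
Proof.
move=> hf hH.
rewrite (apolarwE _ (msize_homog hH)) (@sumB _ n d (fun m => H@_m *: mderivm m (gw d w))).
rewrite mcoeff_sum mxE; apply: eq_bigr => i _.
rewrite mcoeffZ mcoeff0_mderivm -/(mfact _) gw_coeff mxE.
have [e|e] := eqVneq (mdeg (ev i)) d.+1; last first.
  by rewrite (dhomog_nemf_coeff hH e) !mul0r.
by rewrite mul1r mulfVK // (mfact_nz hf) // e.
Qed.

Lemma coefU (k : fieldType) (n : nat) m l (f : {mpoly k[n]}) :
  (mderivm m f)@_(U_(l)%MM) = (mderiv l f)@_m * (mfact m)%:R.
Proof.
have := mcoeff_mderiv l (mderivm m f) 0%MM; rewrite add0m mnm0E mulr1n => <-.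
rewrite -mderivmU1m -mderivmDm addmC mderivmDm mderivmU1m mcoeff0_mderivm //.
Qed.

Lemma entry_col (k : fieldType) (m p : nat) (A : 'rV[k]_m) (M : 'M[k]_(m, p)) c :
  (A *m col c M) 0 0 = (A *m M) 0 c.
Proof. by rewrite !mxE; apply: eq_bigr => t _; rewrite !mxE. Qed.

Lemma nz_entry (k : fieldType) (p : nat) (A : 'rV[k]_p) :
  A != 0 -> exists c, A 0 c != 0.
Proof.
move=> hA; case: (pickP (fun c => A 0 c != 0)) => [c hc|h0]; first by exists c.
case/eqP: hA; apply/matrixP => i c; rewrite ord1 mxE.
by move: (h0 c) => /= /negbFE /eqP.
Qed.

Lemma sep_col (k : fieldType) (m p : nat) (A : 'rV[k]_p) (M : 'M[k]_(m, p)) :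
  ~~ (A <= M)%MS -> exists w : 'cV[k]_p, M *m w = 0 /\ (A *m w) 0 0 != 0.
Proof.
rewrite submxE => /nz_entry [c hc]; exists (col c (cokermx M)); split.
  by rewrite colE mulmxA mulmx_coker mul0mx.
by rewrite entry_col.
Qed.

Lemma grad_from (k : fieldType) (n d : nat) (f : {mpoly k[n]}) (w : 'cV[k]_#|{:Bt n d}|) :
  ((d.+1)`!)%:R != 0 :> k -> f \is (d.+1).-homog -> Umx d f *m w = 0 ->
  grad_span_sub (gw d w) f.
Proof.
move=> hf hfh hU j.
pose v := mderiv j (gw d w).
have hv : v \is d.-homog.
  have := mderivm_homog (m := U_(j)%MM) (gw_homog w) ltac:(by rewrite mdeg1).
  by rewrite mdeg1 subn1 /= mderivmU1m.
have key : forall r, (apolar (Gr d f r) v)@_0 = 0.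
  move=> r; rewrite /v -mderivmU1m -apolarX -apolarM mulrC.
  rewrite (pair_gw _ hf (XG_homog _ (Gr_homog _ _))).
  have -> : rv d ('X_j * Gr d f r) = row (enum_rank (j, r)) (Umx d f).
    by apply/rowP => i; rewrite !mxE enum_rankK.
  by rewrite -row_mul hU row0 mxE.
pose v' : 'rV[k]_#|{:Bt n d}| :=
  \row_i ((mdeg (ev i) == d)%:R * (v@_(ev i) * (mfact (ev i))%:R)).
have kv : kermx (Dmx d f) *m v'^T = 0.
  apply/matrixP => r c; rewrite ord1 [RHS]mxE -(key r) mxE.
  rewrite /Gr /Gx apolar_sum mcoeff_sum; apply: eq_bigr => i _.
  by rewrite apolarZ mcoeffZ pairX !mxE mulrCA mulrA.
have sv : (v' <= (Dmx d f)^T)%MS.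
  apply: contraT => /sep_col [y [hy hvy]].
  have hy' : (y^T <= kermx (Dmx d f))%MS.
    by rewrite sub_kermx -[Dmx d f]trmxK -trmx_mul hy trmx0.
  move/submxP: hy' => [z hz].
  have : (v' *m y)^T = 0 by rewrite trmx_mul hz -mulmxA kv mulmx0.
  move/matrixP => /(_ 0 0); rewrite !mxE => e.
  by move: hvy; rewrite mxE e eqxx.
have [cc hcc] := submxP sv.
exists (fun l => cc 0 l); apply/mpolyP => m.
rewrite -/v [in RHS]mcoeff_sum.
have [e|e] := eqVneq (mdeg m) d; last first.
  rewrite (dhomog_nemf_coeff hv e) big1 // => l _; rewrite mcoeffZ.
  have hl := mderivm_homog (m := U_(l)%MM) hfh ltac:(by rewrite mdeg1).
  rewrite mdeg1 subn1 /= mderivmU1m in hl.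
  by rewrite (dhomog_nemf_coeff hl e) mulr0.
have [t ht] := ev_surj (d := d) (m := m) ltac:(by rewrite e ltnS leqnSn).
have fnz : (mfact m)%:R != 0 :> k by apply: (mfact_nz hf); rewrite e.
apply: (mulIf fnz).
move/matrixP: hcc => /(_ 0 t); rewrite !mxE ht e eqxx mul1r => ->.
rewrite mulr_suml; apply: eq_bigr => l _.
by rewrite !mxE ht e eqxx mul1r coefU mcoeffZ mulrA.
Qed.

Lemma dir_fwd (k : fieldType) (n d : nat) (f : {mpoly k[n]}) :
  ((d.+1)`!)%:R != 0 :> k -> f \is (d.+1).-homog ->
  has_min_gen_in_degree f d.+1 ->
  exists g : {mpoly k[n]},
     [/\ g \is (d.+1).-homog, ~ (exists c : k, g = c *: f) & grad_span_sub g f].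
Proof.
move=> hf hfh [F [hFh hFf hnot]].
have /sep_col [w [hU hw]] := notinU hfh hFh hnot.
exists (gw d w); split; first exact: gw_homog.
  move=> [c hc]; move: hw; rewrite -(pair_gw w hf hFh) hc apolarZr.
  by rewrite [apolar F f]hFf scaler0 mcoeff0 eqxx.
exact: grad_from.
Qed.

Unset Implicit Arguments.

Theorem proposition3p9 (k : closedFieldType) (n d : nat) (f : {mpoly k[n]}) :
  ((d.+1)`!)%:R != 0 :> k ->
  f \is (d.+1).-homog ->
  (has_min_gen_in_degree f d.+1 <->
   exists g : {mpoly k[n]},
     [/\ g \is (d.+1).-homog, ~ (exists c : k, g = c *: f) & grad_span_sub g f]).
Proof.
move=> hf hfh; split; first exact: dir_fwd.
by move=> [g [hg hnm hgr]]; apply: (dir_back hf hfh hg hnm hgr).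
Qed.
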